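(* Let $\alpha\in(0,1)$ and let $\bm A,\bm B\in\mathbb{C}^{N\times N}$ be orthogonal projection matrices. Define $\widetilde\Delta_0=\operatorname{Tr}(\bm A)-\alpha N$ and, for $k\ge1$, $$\widetilde\Delta_k=-\sum_{a=0}^{k-1}\widetilde\Delta_a\sum_{j=1}^{k-1}(-\alpha)^{k-j}q_{k,j,a}(1)+\mathbf 1\{k\text{ odd}\}\,2\alpha^k\big(\operatorname{Tr}(\bm B)-\tfrac12N\big)+\operatorname{Tr}\Big(\big((\bm A-\alpha\bm I_N)(2\bm B-\bm I_N)\big)^k\Big).$$ Also define $\widetilde\delta_0=\operatorname{Tr}(\bm A)-\alpha N$ and, for $k\ge1$, $$\widetilde\delta_k=\operatorname{Tr}\Big(\big((\bm A-\alpha\bm I_N)(2\bm B-\bm I_N)\big)^k\Big)+\mathbf 1\{k\text{ even}\}\,2\alpha^k\big(\operatorname{Tr}(\bm A)-\alpha N\big)+\mathbf 1\{k\text{ odd}\}\,2\alpha^k\big(\operatorname{Tr}(\bm B)-\tfrac12N\big).$$ Then for all $k\ge1$, $$\widetilde\Delta_k=\sum_{\substack{0\le a\le k\\ a\equiv k\ (\mathrm{mod}\ 2)}}\binom{k}{\frac{k+a}2}(\alpha(1-\alpha))^{\frac{k-a}2}\,\widetilde\delta_a.$$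
   Context: For $k\ge1$ and a nonempty $S=\{s_1<\dots<s_j\}\subseteq[k]$, define $p_1(S)=s_2-s_1,\dots,p_{j-1}(S)=s_j-s_{j-1}$, $p_j(S)=k+s_1-s_j$. For $1\le j\le k$ and $0\le a\le j$ define $$q_{k,j,a}(x)=\sum_{S\subseteq[k],\,|S|=j}\ \sum_{A\subseteq[j],\,|A|=a}\ \prod_{i=1}^j\Big(\sum_{b=0}^{p_i(S)-1}(-1)^{p_i(S)-1-b}x^b+(-1)^{p_i(S)}\mathbf 1\{i\notin A\}\Big),$$ and set $q_{k,0,0}=0$ and $q_{k,j,a}=0$ when $a>j$. *)

(* Defs.v *)
From HB Require Import structures.
From mathcomp Require Import all_boot all_order all_algebra.
From mathcomp Require Import complex.
Set Implicit Arguments. Unset Strict Implicit. Unset Printing Implicit Defensive.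
Import Order.TTheory GRing.Theory Num.Theory.
Local Open Scope ring_scope.

Definition ctrmx (C : numClosedFieldType) (m n : nat) (A : 'M[C]_(m, n)) : 'M[C]_(n, m) :=
  (map_mx Num.conj A)^T.

Definition orth_proj (C : numClosedFieldType) (N : nat) (A : 'M[C]_N) : Prop :=
  A *m A = A /\ ctrmx A = A.

(* The increasing list s_1 < ... < s_j of the elements of S (as naturals;
   S is a subset of 'I_k, i.e. {0,...,k-1}, a shift of [k] that does not
   affect the differences p_i). *)
Definition sortedS (k : nat) (S : {set 'I_k}) : seq nat :=
  sort leq [seq val i | i <- enum S].

(* p_i(S), with i 0-based: p_i = s_{i+1} - s_i for i < j-1, and
   p_{j-1} = k + s_1 - s_j. *)
Definition pS (k : nat) (S : {set 'I_k}) (i : nat) : nat :=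
  let s := sortedS S in
  let j := size s in
  (if i.+1 < j then nth 0 s i.+1 - nth 0 s i
  else k + nth 0 s 0 - nth 0 s j.-1)%N.

Definition qkja (R : comRingType) (k j a : nat) (x : R) : R :=
  if (j == 0)%N || (j < a)%N then 0 else
  \sum_(S : {set 'I_k} | #|S| == j)
    \sum_(A : {set 'I_j} | #|A| == a)
      \prod_(i < j)
        ((\sum_(b < pS S i) (-1) ^+ (pS S i - 1 - b)%N * x ^+ b)
         + (-1) ^+ (pS S i) * (if i \in A then 0 else 1)).

Section Deltas.
Variables (C : numClosedFieldType) (N : nat) (alpha : C) (A B : 'M[C]_N).

Definition trT (k : nat) : C :=
  \tr (((A - alpha%:M) *m (2%:R *: B - 1%:M)) ^+ k).

Definition d0 : C := \tr A - alpha * N%:R.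
Definition dB : C := \tr B - N%:R / 2%:R.

Definition delta_t (k : nat) : C :=
  if k == 0%N then d0 else
  trT k + (if ~~ odd k then 2%:R * alpha ^+ k * d0 else 0)
        + (if odd k then 2%:R * alpha ^+ k * dB else 0).

Definition Delta_next (k : nat) (prev : seq C) : C :=
  - (\sum_(a < k) prev`_a *
       \sum_(1 <= j < k) (- alpha) ^+ (k - j) * qkja k j a 1)
  + (if odd k then 2%:R * alpha ^+ k * dB else 0)
  + trT k.

Fixpoint Deltas (k : nat) : seq C :=
  match k with
  | 0 => [:: d0]
  | k'.+1 => rcons (Deltas k') (Delta_next k (Deltas k'))
  end.

Definition Delta_t (k : nat) : C := nth 0 (Deltas k) k.

End Deltas.

(* Main.v *)
Require Import Defs.
From HB Require Import structures.
From mathcomp Require Import all_boot all_order all_algebra.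
From mathcomp Require Import complex.
From mathcomp Require Import ring zify.
Set Implicit Arguments. Unset Strict Implicit. Unset Printing Implicit Defensive.
Import Order.TTheory GRing.Theory Num.Theory.
Local Open Scope ring_scope.


Lemma sortedS_lt k (S : {set 'I_k}) : sorted ltn (sortedS S).
Proof.
rewrite ltn_sorted_uniq_leq sort_uniq (sort_sorted leq_total) andbT.
by rewrite map_inj_uniq ?enum_uniq //; exact: val_inj.
Qed.

Lemma mem_sortedS k (S : {set 'I_k}) x :
  (x \in sortedS S) = [exists i : 'I_k, (i \in S) && (val i == x)].
Proof.
rewrite /sortedS mem_sort. apply/mapP/existsP.
  case=> i Hi ->. exists i. rewrite -mem_enum Hi eqxx //.
case=> i /andP[Hi /eqP <-]. exists i => //. rewrite mem_enum //.
Qed.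

Lemma sortedS_bound k (S : {set 'I_k}) x : x \in sortedS S -> (x < k)%N.
Proof. rewrite mem_sortedS. move=> /existsP[i /andP[_ /eqP Hx]]. rewrite -Hx. exact: ltn_ord. Qed.

Lemma size_sortedS k (S : {set 'I_k}) : size (sortedS S) = #|S|.
Proof. by rewrite /sortedS size_sort size_map cardE. Qed.

Lemma sortedS_nil k (S : {set 'I_k}) : (sortedS S == [::]) = (S == set0).
Proof. by rewrite -size_eq0 size_sortedS cards_eq0. Qed.

Definition extS n (S : {set 'I_n}) (b : bool) : {set 'I_n.+1} :=
  [set i | if unlift ord_max i is Some j then j \in S else b].
Definition restrS n (S : {set 'I_n.+1}) : {set 'I_n} :=
  [set j | lift ord_max j \in S].

Lemma restr_extS n (S : {set 'I_n}) b : restrS (extS S b) = S.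
Proof. by apply/setP => j; rewrite !inE liftK. Qed.

Lemma max_extS n (S : {set 'I_n}) b : (ord_max \in extS S b) = b.
Proof. by rewrite inE unlift_none. Qed.

Lemma extS_restr n (S : {set 'I_n.+1}) : extS (restrS S) (ord_max \in S) = S.
Proof.
apply/setP => i; rewrite inE; case: unliftP => [j ->|->] //.
by rewrite inE.
Qed.

Lemma mem_extS n (S : {set 'I_n}) b x :
  (x \in sortedS (extS S b)) = (x \in sortedS S) || (b && (x == n)).
Proof.
rewrite !mem_sortedS; apply/existsP/orP => [[i /andP[]]|].
  rewrite inE; case: unliftP => [j ->|->] Hj /eqP <-.
    by left; apply/existsP; exists j; rewrite Hj /= /bump leqNgt ltn_ord add0n eqxx.
  by right; rewrite Hj eqxx.
case=> [/existsP[j /andP[Hj /eqP <-]]|/andP[Hb /eqP ->]].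
  by exists (lift ord_max j); rewrite inE liftK Hj /= /bump leqNgt ltn_ord add0n eqxx.
by exists ord_max; rewrite inE unlift_none Hb eqxx.
Qed.

Lemma sortedS_ext0 n (S : {set 'I_n}) : sortedS (extS S false) = sortedS S.
Proof.
apply: (irr_sorted_eq ltn_trans ltnn); rewrite ?sortedS_lt // => x.
by rewrite mem_extS orbF.
Qed.

Lemma sortedS_ext1 n (S : {set 'I_n}) :
  sortedS (extS S true) = rcons (sortedS S) n.
Proof.
apply: (irr_sorted_eq ltn_trans ltnn); rewrite ?sortedS_lt //.
  have := sortedS_lt S; have := @sortedS_bound n S.
  case: (sortedS S) => [|y p] //= Hb Hp.
  rewrite rcons_path Hp /=; apply: Hb.
  by rewrite -[last y p]/(last y p) mem_last.
by move=> x; rewrite mem_extS mem_rcons in_cons orbC.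
Qed.

Lemma sum_split (V : nmodType) n (g : seq nat -> V) :
  \sum_(S : {set 'I_n.+1}) g (sortedS S) =
  \sum_(S : {set 'I_n}) (g (sortedS S) + g (rcons (sortedS S) n)).
Proof.
rewrite (reindex (fun p : {set 'I_n} * bool => extS p.1 p.2)) /=; last first.
  exists (fun S => (restrS S, ord_max \in S)) => [[S b] _|S _] /=.
    by rewrite restr_extS max_extS.
  by rewrite extS_restr.
rewrite -(pair_bigA _ (fun S b => g (sortedS (extS S b)))) /=; apply: eq_bigr => S _.
by rewrite big_bool /= sortedS_ext0 sortedS_ext1 addrC.
Qed.

Definition pL (k : nat) (s : seq nat) (i : nat) : nat :=
  (if i.+1 < size s then nth 0 s i.+1 - nth 0 s i
   else k + nth 0 s 0 - nth 0 s (size s).-1)%N.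

Lemma pS_pL k (S : {set 'I_k}) i : pS S i = pL k (sortedS S) i.
Proof. by []. Qed.

Definition ocL k s := count (fun i => odd (pL k s i)) (iota 0 (size s)).
Definition icL (s : seq nat) :=
  count (fun i => odd (nth 0%N s i.+1 - nth 0%N s i)%N) (iota 0 (size s).-1).

Lemma size_pos (s : seq nat) : s != [::] -> exists m, size s = m.+1.
Proof. by case: s => // x p _; exists (size p). Qed.

Lemma ocL_icL k s : s != [::] ->
  ocL k s = (icL s + odd (k + head 0%N s - last 0%N s))%N.
Proof.
move=> Hs; have [m Hm] := size_pos Hs.
rewrite /ocL /icL Hm -[(m.+1).-1]/m -addn1 iotaD count_cat /= add0n addn0; congr (_ + _)%N.
 apply: eq_in_count => i; rewrite mem_iota /= add0n => Hi.
  by rewrite /pL Hm ltnS Hi.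
rewrite /pL Hm ltnn -Hm nth_last; congr (odd (_ + _ - _)).
Qed.

Lemma icL_rcons s x : s != [::] ->
  icL (rcons s x) = (icL s + odd (x - last 0%N s))%N.
Proof.
move=> Hs; have [m Hm] := size_pos Hs.
rewrite /icL size_rcons Hm -[(m.+2).-1]/(m.+1) -[(m.+1).-1]/m -addn1 iotaD count_cat /= add0n addn0; congr (_ + _)%N.
  apply: eq_in_count => i; rewrite mem_iota /= add0n => Hi.
  by rewrite !nth_rcons Hm ltnS Hi ltnW.
rewrite !nth_rcons Hm ltnn eqxx ltnSn -[m]/(m.+1.-1) -Hm nth_last.
done.
Qed.

Lemma sortedS_full k (S : {set 'I_k}) : #|S| = k -> sortedS S = iota 0 k.
Proof.
move=> HS; apply: (irr_sorted_eq ltn_trans ltnn); rewrite ?sortedS_lt ?iota_ltn_sorted //.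
move=> x; rewrite mem_iota add0n /=; apply/idP/idP => [/sortedS_bound //|Hx].
have -> : S = setT.
  apply/eqP; rewrite eqEcard subsetT /= cardsT card_ord HS //.
rewrite mem_sortedS; apply/existsP; exists (Ordinal Hx); by rewrite inE eqxx.
Qed.

Lemma ocL_iota k : (0 < k)%N -> ocL k (iota 0 k) = k.
Proof.
move=> Hk; rewrite /ocL size_iota.
transitivity (count predT (iota 0 k)); last by rewrite count_predT size_iota.
apply: eq_in_count => i; rewrite mem_iota add0n /= => Hi.
rewrite /pL size_iota; case: ifP => H.
  by rewrite !nth_iota // ?add0n ?subSn ?subnn // ltnW.
rewrite !nth_iota ?prednK // ?add0n ?addn0 ?leq_pred //.
by rewrite -[k in (k - _)%N](prednK Hk) subSn ?subnn.
Qed.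

Section Comb.
Variables (F : fieldType) (a : F).
Local Notation A := (a%:P : {poly F}).

Definition wt n (s : seq nat) : {poly F} := (- A) ^+ (n - size s).
Definition cnd n (h z : bool) (s : seq nat) :=
  [&& s != [::], odd (head 0%N s) == h & odd (last 0%N s) == z (+) odd n].
Definition U n h z : {poly F} :=
  \sum_(S : {set 'I_n})
     (if cnd n h z (sortedS S) then wt n (sortedS S) * 'X^(icL (sortedS S)) else 0).
Definition src n (h : bool) : {poly F} := if odd n == h then (- A) ^+ n else 0.

Lemma last_sortedS n (S : {set 'I_n}) : sortedS S != [::] -> (last 0%N (sortedS S) < n)%N.
Proof.
case E: (sortedS S) => [|x p] // _; apply: (@sortedS_bound n S).
by rewrite E /= mem_last.
Qed.

Lemma wtS n (S : {set 'I_n}) : wt n.+1 (sortedS S) = - A * wt n (sortedS S).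
Proof.
rewrite /wt size_sortedS subSn ?exprS //.
by rewrite -[X in (_ <= X)%N](card_ord n) max_card.
Qed.

Lemma wt_rcons n (S : {set 'I_n}) :
  wt n.+1 (rcons (sortedS S) n) = wt n (sortedS S).
Proof. by rewrite /wt size_rcons subSS. Qed.

Lemma U_step0 n h : U n.+1 h false = - A * U n h true.
Proof.
rewrite /U (@sum_split _ n (fun s => if cnd n.+1 h false s then wt n.+1 s * 'X^(icL s) else 0)) big_split /= mulr_sumr [X in _ + X]big1 ?addr0.
  apply: eq_bigr => S _; rewrite wtS.
  have -> : cnd n.+1 h false (sortedS S) = cnd n h true (sortedS S).
    by rewrite /cnd /=; case: (odd n).
  by case: ifP; rewrite ?mulr0 // mulrA.
move=> S _; rewrite /cnd last_rcons /=.
by case: (odd n); rewrite /= ?andbF.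
Qed.

Lemma U_step1 n h : U n.+1 h true =
  - A * U n h false + U n h false + 'X * U n h true + src n h.
Proof.
rewrite /U (@sum_split _ n (fun s => if cnd n.+1 h true s then wt n.+1 s * 'X^(icL s) else 0)).
rewrite big_split /= mulr_sumr -!addrA; congr (_ + _).
  apply: eq_bigr => S _; rewrite wtS.
  have -> : cnd n.+1 h true (sortedS S) = cnd n h false (sortedS S).
    by rewrite /cnd /=; case: (odd n).
  by case: ifP; rewrite ?mulr0 // mulrA.
rewrite mulr_sumr addrA -big_split /=.
have E0 : sortedS (set0 : {set 'I_n}) = [::] by apply/eqP; rewrite sortedS_nil.
rewrite (bigD1 set0) //= [X in _ = X + _](bigD1 set0) //= E0.
rewrite {3 4}/cnd /= mulr0 !add0r addrC; congr (_ + _).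
apply: eq_bigr => S HS; rewrite wt_rcons.
have Hne : sortedS S != [::] by rewrite sortedS_nil.
have Hl := last_sortedS Hne.
rewrite /cnd Hne last_rcons /= icL_rcons // oddB ?(ltnW Hl) // exprD.
have -> : head 0%N (rcons (sortedS S) n) = head 0%N (sortedS S).
  by case: (sortedS S) Hne.
case: (odd (head 0%N (sortedS S)) == h) => /=; last first.
  by rewrite andbF mulr0 addr0.
have -> : (rcons (sortedS S) n != [::]) = true by case: (sortedS S).
rewrite negbK eqxx /=.
by case: (odd n); case: (odd (last 0%N (sortedS S))); rewrite /= ?mulr0 ?addr0 ?add0r; ring.
rewrite /cnd /src /wt /icL /= subSS subn0 expr0 mulr1.
by case: (odd n); case: h.
Qed.

Definition Fp k : {poly F} := \sum_(S : {set 'I_k})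
  (if sortedS S != [::] then wt k (sortedS S) * 'X^(ocL k (sortedS S)) else 0).

Lemma F_U k : Fp k = U k false false + 'X * U k false true + 'X * U k true false + U k true true.
Proof.
rewrite /Fp /U !mulr_sumr -!big_split /=; apply: eq_bigr => S _.
case: ifP => Hne; last by rewrite /cnd Hne /= !mulr0 !addr0.
have Hl := last_sortedS Hne.
rewrite ocL_icL // oddB ?oddD; last by rewrite ltnW // ltn_addr.
rewrite /cnd Hne /= exprD.
by case: (odd k); case: (odd (head 0%N (sortedS S))); case: (odd (last 0%N (sortedS S)));
  rewrite /= ?mulr0 ?addr0 ?add0r; ring.
Qed.

Local Notation B := (A * (1 - A)).

Fixpoint pp n : {poly F} :=
  match n with
  | 0 => 2%:R
  | 1 => 'X
  | S ((S m) as m1) => 'X * pp m1 - B * pp m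
  end.

Definition Hp n := pp n - A ^+ n - (- A) ^+ n.

Lemma U0 h z : U 0 h z = 0.
Proof.
rewrite /U big1 // => S _.
have -> : S = set0 by apply/setP => -[].
have -> : sortedS (set0 : {set 'I_0}) = [::] by apply/eqP; rewrite sortedS_nil.
by [].
Qed.

Lemma F_rec n : Fp n.+4 = 'X * Fp n.+3 - (B - A ^+ 2) * Fp n.+2
   - A ^+ 2 * 'X * Fp n.+1 + A ^+ 2 * B * Fp n.
Proof.
rewrite !F_U.
rewrite ?U_step0 ?U_step1.
rewrite ?U_step0 ?U_step1.
rewrite ?U_step0 ?U_step1.
rewrite ?U_step0 ?U_step1.
rewrite /src /=.
case: (odd n) => /=; rewrite ?exprS; ring.
Qed.

Lemma H_rec n : Hp n.+4 = 'X * Hp n.+3 - (B - A ^+ 2) * Hp n.+2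
   - A ^+ 2 * 'X * Hp n.+1 + A ^+ 2 * B * Hp n.
Proof.
rewrite /Hp.
have E4 : pp n.+4 = 'X * pp n.+3 - B * pp n.+2 by [].
have E3 : pp n.+3 = 'X * pp n.+2 - B * pp n.+1 by [].
have E2 : pp n.+2 = 'X * pp n.+1 - B * pp n by [].
rewrite E4 E3 E2 ?exprS; ring.
Qed.

Lemma F_eq_H n : Fp n = Hp n.
Proof.
suff: [/\ Fp n = Hp n, Fp n.+1 = Hp n.+1, Fp n.+2 = Hp n.+2 & Fp n.+3 = Hp n.+3].
  by case.
elim: n => [|n [H0 H1 H2 H3]]; last by split => //; rewrite F_rec H_rec H0 H1 H2 H3.
rewrite /Hp /=; rewrite !F_U ?U_step0 ?U_step1 ?U_step0 ?U_step1 ?U_step0 ?U_step1 !U0 /src /=.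
split; rewrite ?exprS ?expr0; ring.
Qed.
End Comb.


Section Comb2.
Variables (F : fieldType) (a : F).
Local Notation A := (a%:P : {poly F}).
Local Notation B := (A * (1 - A)).
Local Notation pp := (@pp F a).

Definition bet : F := a * (1 - a).
Lemma BE : B = bet%:P.
Proof. by rewrite /bet rmorphM rmorphB rmorph1. Qed.

Definition pt n : {poly F} := if n is 0 then 1 else pp n.
Arguments pt : simpl never.
Definition cf n i : F := 'C(n, i)%:R * bet ^+ i.

Lemma Xpt2 n : 'X * pt n.+2 = pt n.+3 + B * pt n.+1.
Proof. rewrite /pt; have -> : pp n.+3 = 'X * pp n.+2 - B * pp n.+1 by []. ring. Qed.
Lemma Xpt1 : 'X * pt 1 = pt 2 + B * pt 0 + B * pt 0.
Proof. rewrite /pt /=; ring. Qed.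
Lemma Xpt0 : 'X * pt 0 = pt 1.
Proof. by rewrite /pt /= mulr1. Qed.

Lemma cfS n i : cf n.+1 i.+1 = cf n i.+1 + bet * cf n i.
Proof. by rewrite /cf binS natrD exprS; ring. Qed.
Lemma cf0 n : cf n 0 = 1.
Proof. by rewrite /cf bin0 mulr1. Qed.

Definition Eev m := \sum_(0 <= i < m.+1) (cf (2 * m) i)%:P * pt (2 * m - 2 * i).
Definition Eod m := \sum_(0 <= i < m.+1) (cf (2 * m).+1 i)%:P * pt ((2 * m).+1 - 2 * i).

Lemma Sodd m : 'X ^+ (2 * m) = Eev m -> 'X ^+ (2 * m).+1 = Eod m.
Proof.
move=> IH; rewrite exprS IH /Eev /Eod mulr_sumr big_nat_recr //=.
rewrite [RHS]big_nat_recl // cf0 polyC1 mul1r.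
rewrite (eq_big_nat _ _ (F2 := fun i => (cf (2 * m) i)%:P * pt ((2 * m).+1 - 2 * i)
   + B * ((cf (2 * m) i)%:P * pt ((2 * m).+1 - 2 * i.+1)))); last first.
  move=> i /andP[_ Hi].
  have -> : (2 * m - 2 * i = (2 * m - 2 * i - 2).+2)%N by lia.
  have -> : ((2 * m).+1 - 2 * i = (2 * m - 2 * i - 2).+3)%N by lia.
  have -> : ((2 * m).+1 - 2 * i.+1 = (2 * m - 2 * i - 2).+1)%N by lia.
  by rewrite mulrCA Xpt2; ring.
rewrite big_split /= subnn mulrCA Xpt0.
rewrite (eq_big_nat _ _ (F1 := fun i => (cf (2 * m).+1 i.+1)%:P * pt ((2 * m).+1 - 2 * i.+1))
  (F2 := fun i => (cf (2 * m) i.+1)%:P * pt ((2 * m).+1 - 2 * i.+1)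
       + B * ((cf (2 * m) i)%:P * pt ((2 * m).+1 - 2 * i.+1)))); last first.
  by move=> i _; rewrite cfS /bet; ring.
rewrite big_split /= addrAC [RHS]addrA; congr (_ + _).
have -> : pt 1 = pt ((2 * m).+1 - 2 * m) by congr pt; lia.
rewrite -(big_nat_recr m 0 (fun i => (cf (2 * m) i)%:P * pt ((2 * m).+1 - 2 * i))) //.
by rewrite big_nat_recl // cf0 polyC1 mul1r muln0 subn0.
Qed.

Lemma cf_mid m : cf (2 * m).+1 m.+1 = bet * cf (2 * m).+1 m.
Proof.
rewrite /cf exprS -(bin_sub (n := (2 * m).+1) (m := m)); last by lia.
have -> : ((2 * m).+1 - m = m.+1)%N by lia.
ring.
Qed.

Lemma Seven m : 'X ^+ (2 * m).+1 = Eod m -> 'X ^+ (2 * m.+1) = Eev m.+1.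
Proof.
move=> IH; have E : (2 * m.+1 = (2 * m).+2)%N by lia.
rewrite /Eev E exprS IH /Eod mulr_sumr big_nat_recr //.
rewrite (eq_big_nat _ _ (F2 := fun i => (cf (2 * m).+1 i)%:P * pt ((2 * m).+2 - 2 * i)
   + B * ((cf (2 * m).+1 i)%:P * pt (2 * m - 2 * i)))); last first.
  move=> i /andP[_ Hi].
  have [k Hk] : exists k, (2 * m - 2 * i = k.+1)%N by exists (2 * m - 2 * i - 1)%N; lia.
  have -> : ((2 * m).+1 - 2 * i = k.+2)%N by lia.
  have -> : ((2 * m).+2 - 2 * i = k.+3)%N by lia.
  rewrite Hk.
  by rewrite mulrCA Xpt2; ring.
have -> : ((2 * m).+1 - 2 * m = 1)%N by lia.
rewrite mulrCA Xpt1 big_split /=.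
rewrite big_nat_recl // cf0 polyC1 mul1r muln0 subn0.
rewrite (eq_big_nat _ _ (F1 := fun i => (cf (2 * m).+2 i.+1)%:P * pt ((2 * m).+2 - 2 * i.+1))
  (F2 := fun i => (cf (2 * m).+1 i.+1)%:P * pt (2 * m - 2 * i)
       + B * ((cf (2 * m).+1 i)%:P * pt (2 * m - 2 * i)))); last first.
  move=> i _; have -> : ((2 * m).+2 - 2 * i.+1 = 2 * m - 2 * i)%N by lia.
  by rewrite cfS /bet; ring.
rewrite big_split /= !(big_nat_recr m 0) // subnn cf_mid.
have HH : pt (2 * m).+2 + \sum_(0 <= i < m) (cf (2 * m).+1 i.+1)%:P * pt (2 * m - 2 * i)
   = \sum_(0 <= i < m) (cf (2 * m).+1 i)%:P * pt ((2 * m).+2 - 2 * i)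
     + (cf (2 * m).+1 m)%:P * pt 2.
  have -> : pt 2 = pt ((2 * m).+2 - 2 * m) by congr pt; lia.
  rewrite -(big_nat_recr m 0 (fun i => (cf (2 * m).+1 i)%:P * pt ((2 * m).+2 - 2 * i))) //.
  rewrite big_nat_recl // cf0 polyC1 mul1r muln0 subn0; congr (_ + _).
  by apply: eq_big_nat => i _; congr (_ * pt _); lia.
have HH' : \sum_(0 <= i < m) (cf (2 * m).+1 i)%:P * pt ((2 * m).+2 - 2 * i) =
  pt (2 * m).+2 + \sum_(0 <= i < m) (cf (2 * m).+1 i.+1)%:P * pt (2 * m - 2 * i)
  - (cf (2 * m).+1 m)%:P * pt 2 by rewrite HH addrK.
rewrite HH' /= /bet; ring.
Qed.

Lemma expand m : 'X ^+ (2 * m) = Eev m /\ 'X ^+ (2 * m).+1 = Eod m.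
Proof.
elim: m => [|m [_ IH]]; last first.
  have H := Seven IH; split => //; exact: Sodd.
rewrite /Eev /Eod !big_nat1 !cf0 polyC1 !mul1r muln0 expr0 expr1.
by split.
Qed.

End Comb2.


Arguments pp : simpl never.
Section Comb3.
Variables (F : fieldType) (a : F).
Local Notation A := (a%:P : {poly F}).
Local Notation B := (A * (1 - A)).
Local Notation pp := (@pp F a).
Local Notation pt := (@pt F a).
Local Notation cf := (@cf F a).

Definition EG b := \sum_(0 <= i < b./2.+1) (cf b i)%:P * pt (b - 2 * i).

Lemma expandG b : 'X ^+ b = EG b.
Proof.
have [m [->|->]] : exists m, b = (2 * m)%N \/ b = (2 * m).+1.
  exists b./2; rewrite mul2n; case Ho: (odd b); [right|left];
  by rewrite -[b in b = _](odd_double_half b) Ho.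
  by rewrite /EG mul2n half_double -mul2n; case: (expand a m).
rewrite /EG mul2n /= uphalf_double -mul2n; case: (expand a m) => _ ->.
by [].
Qed.

Lemma Bc : B = (a * (1 - a))%:P.
Proof. by rewrite rmorphM rmorphB rmorph1. Qed.

Lemma pp_van n i : (n < i)%N -> (pp n)`_i = 0.
Proof.
suff : (forall i, (n < i)%N -> (pp n)`_i = 0) /\ (forall i, (n.+1 < i)%N -> (pp n.+1)`_i = 0).
  by case=> H _; apply: H.
elim: n {i} => [|n [IH1 IH2]].
  split => -[|i] // Hi.
    by rewrite /pp /= coefMn coef1 /= mul0rn.
  by rewrite /pp /= coefX; case: i Hi.
split => // -[|i] // Hi.
have -> : pp n.+2 = 'X * pp n.+1 - B * pp n by [].
rewrite Bc coefB coefXM coefCM /= IH2 ?IH1 ?mulr0 ?subr0 //; lia.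
Qed.

Lemma pp_lead n : (0 < n)%N -> (pp n)`_n = 1.
Proof.
case: n => // m _; elim: m => [|m IH]; first by rewrite /pp /= coefX.
have -> : pp m.+2 = 'X * pp m.+1 - B * pp m by [].
by rewrite Bc coefB coefXM coefCM /= IH pp_van ?mulr0 ?subr0.
Qed.


Variables (Rv dv : nat -> F).
Hypothesis hR : forall b, Rv b = \sum_(0 <= i < b./2.+1) cf b i * dv (b - 2 * i).
Definition Lam m (P : {poly F}) := \sum_(i < m) P`_i * Rv i.

Lemma Lam_X m c : (c < m)%N -> Lam m 'X^c = Rv c.
Proof.
move=> Hc; rewrite /Lam (bigD1 (Ordinal Hc)) //= coefXn eqxx mul1r big1 ?addr0 //.
move=> i Hi; rewrite coefXn.
have -> : (val i == c) = false.
  by apply/negbTE; apply: contra Hi => /eqP Hi; apply/eqP/val_inj.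
by rewrite mul0r.
Qed.

Lemma Lam_sum m n (f : nat -> F) (g : nat -> {poly F}) :
  Lam m (\sum_(0 <= i < n) (f i)%:P * g i) = \sum_(0 <= i < n) f i * Lam m (g i).
Proof.
rewrite /Lam; under eq_bigr do rewrite coef_sum mulr_suml.
rewrite exchange_big; apply: eq_bigr => i _; rewrite mulr_sumr.
by apply: eq_bigr => j _; rewrite coefCM mulrA.
Qed.

Lemma addcancel (V : zmodType) (x y s1 s2 : V) : s1 = s2 -> x + s1 = y + s2 -> x = y.
Proof. by move=> -> /addIr. Qed.

Lemma Lam_pt m b : (b < m)%N -> Lam m (pt b) = dv b.
Proof.
move: b; elim/ltn_ind => b IH Hb.
have E := Lam_X Hb; rewrite expandG /EG Lam_sum hR !big_nat_recl // in E.
rewrite !cf0 !mul1r muln0 subn0 in E.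
apply: (addcancel _ E); apply: eq_big_nat => i /andP[_ Hi]; congr (_ * _).
have H2 : (2 * b./2 <= b)%N by rewrite mul2n halfK leq_subr.
apply: IH; lia.
Qed.

Lemma Lam_subC m P c : (0 < m)%N -> Lam m (P - c%:P) = Lam m P - c * Rv 0.
Proof.
case: m => // m _; rewrite /Lam.
under eq_bigr do rewrite coefB mulrBl.
rewrite sumrB; congr (_ - _).
rewrite big_ord_recl /= coefC /= big1 ?addr0 // => i _.
by rewrite coefC /= mul0r.
Qed.

Lemma key k : (0 < k)%N ->
  \sum_(i < k) (Fp a k)`_i * Rv i + Rv k = dv k - (a ^+ k + (- a) ^+ k) * Rv 0.
Proof.
move=> Hk.
have HF : Fp a k = pt k - (a ^+ k + (- a) ^+ k)%:P.
  rewrite F_eq_H /Hp rmorphD !rmorphXn rmorphN /=.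
  by case: k Hk => // k _; rewrite /pt opprD addrA.
transitivity (Lam k.+1 (Fp a k)).
  rewrite /Lam big_ord_recr /=; congr (_ + _).
  rewrite HF coefB coefC; case: k Hk HF => // k _ _.
  by rewrite /pt pp_lead // subr0 mul1r.
by rewrite HF Lam_subC // Lam_pt.
Qed.

End Comb3.


Lemma card_count (T : finType) (P : pred T) : #|P| = count P (enum T).
Proof. rewrite cardE /enum_mem size_filter count_filter; apply: eq_count => x /=. by rewrite andbT. Qed.
Lemma card_ord_count j (P : pred nat) : #|[set i : 'I_j | P i]| = count P (iota 0 j).
Proof. rewrite cardsE card_count -val_enum_ord count_map. by []. Qed.

Lemma altsum (R : comNzRingType) p :
  \sum_(b < p) (-1) ^+ (p - 1 - b)%N = (odd p)%:R :> R.
Proof.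
elim: p => [|p IH]; first by rewrite big_ord0.
rewrite big_ord_recr /= subSS subn0 subnn expr0.
rewrite (eq_bigr (fun b : 'I_p => - (-1) ^+ (p - 1 - b)%N)); last first.
  move=> i _; have Hi := ltn_ord i.
  rewrite (_ : (p - i = (p - 1 - i).+1)%N); last by lia. 
  by rewrite exprS mulN1r.
rewrite sumrN IH; by case: (odd p); rewrite /= ?addNr ?oppr0 ?add0r.
Qed.

Lemma factor (R : comNzRingType) p (b : bool) :
  \sum_(c < p) (-1) ^+ (p - 1 - c)%N * 1 ^+ c + (-1) ^+ p * (if b then 0 else 1)
  = (b == odd p)%:R :> R.
Proof.
under eq_bigr do rewrite expr1n mulr1.
rewrite altsum -signr_odd; case: b; case: (odd p); rewrite /= ?mulr0 ?addr0 ?mulr1 //.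
- by rewrite expr1 subrr.
- by rewrite expr0 add0r.
Qed.

Lemma prod_eq (R : comNzRingType) (j : nat) (A : {set 'I_j}) (c : 'I_j -> bool) :
  \prod_(i < j) ((i \in A) == c i)%:R = (A == [set i | c i])%:R :> R.
Proof.
case E: (A == [set i | c i]).
  move/eqP: E => ->; rewrite big1 // => i _; by rewrite inE eqxx.
case: (pickP (fun i => (i \in A) != c i)) => [i Hi | H].
  by rewrite (bigD1 i) //= (negbTE Hi) mul0r.
suff : A == [set i | c i] by rewrite E.
apply/eqP/setP => i; rewrite inE; by move/negbFE/eqP: (H i).
Qed.

Lemma qkja1 (F : fieldType) k j a : (0 < j)%N ->
  qkja k j a (1 : F) = \sum_(S : {set 'I_k} | #|S| == j) ((ocL k (sortedS S) == a)%:R).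
Proof.
move=> Hj; rewrite /qkja; have -> : (j == 0)%N = false by case: j Hj.
case: ifP => Hja /=.
  rewrite big1 // => S /eqP HS.
  have : (ocL k (sortedS S) <= j)%N.
    by rewrite -HS -size_sortedS /ocL -[X in (_ <= X)%N](size_iota 0) count_size.
  by case: eqP => // ->; lia.
apply: eq_bigr => S /eqP HS.
under eq_bigr do under eq_bigr do rewrite factor.
under eq_bigr do rewrite (@prod_eq _ _ _ (fun i => odd (pS S i))).
transitivity (\sum_(A0 : {set 'I_j} | A0 == [set i : 'I_j | odd (pS S i)]) ((#|A0| == a)%:R : F)).
  rewrite big_mkcond [RHS]big_mkcond /=; apply: eq_bigr => A0 _.
  by case: (#|A0| == a); case: (A0 == _).
rewrite big_pred1_eq (@card_ord_count j (fun n => odd (pS S n))) -HS -size_sortedS.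
by [].
Qed.

Lemma sum_nat_pick (V : zmodType) m n c (g : nat -> V) :
  \sum_(m <= j < n) (if c == j then g j else 0) = if (m <= c < n)%N then g c else 0.
Proof.
elim: n => [|n IH]; first by rewrite big_geq // ltn0 andbF.
case: (leqP m n) => Hmn.
  rewrite big_nat_recr //= IH; case: (eqVneq c n) => [->|Hc].
    by rewrite ltnn andbF add0r ltnSn Hmn.
  rewrite addr0; congr (if _ then _ else _); move/eqP: Hc; lia.
rewrite big_geq //; case: ifP => //; lia.
Qed.

Lemma cka (F : fieldType) (al : F) k a : (a < k)%N ->
  \sum_(1 <= j < k) (- al) ^+ (k - j) * qkja k j a 1 = (Fp al k)`_a.
Proof.
move=> Hak.
rewrite (eq_big_nat _ _ (F2 := fun j => \sum_(S : {set 'I_k})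
   (if #|S| == j then (- al) ^+ (k - j) * (ocL k (sortedS S) == a)%:R else 0))); last first.
  move=> j /andP[Hj _]; rewrite qkja1 // mulr_sumr big_mkcond /=.
  by apply: eq_bigr => S _; case: ifP; rewrite ?mulr0.
rewrite exchange_big /= /Fp coef_sum; apply: eq_bigr => S _.
rewrite (sum_nat_pick 1 k #|S| (fun j => (- al) ^+ (k - j) * (ocL k (sortedS S) == a)%:R)).
rewrite sortedS_nil /wt size_sortedS.
have Hle : (#|S| <= k)%N by rewrite -[X in (_ <= X)%N](card_ord k) max_card.
case: (eqVneq S set0) => [->|HS]; first by rewrite cards0 /= coef0.
have Hp : (0 < #|S|)%N by rewrite card_gt0.
rewrite Hp /= -rmorphN -rmorphXn coefCM coefXn.
case: (ltnP #|S| k) => Hk.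
  by rewrite eq_sym.
have Hf : #|S| = k by apply/eqP; rewrite eqn_leq Hle Hk.
rewrite sortedS_full // ocL_iota; last by rewrite -Hf.
by rewrite (_ : (a == k) = false) ?mulr0 //; apply/negbTE; rewrite neq_ltn Hak.
Qed.


Lemma reindex_par (V : zmodType) b (f : nat -> V) :
  \sum_(0 <= a < b.+1 | odd a == odd b) f a = \sum_(0 <= i < b./2.+1) f (b - 2 * i)%N.
Proof.
move: f; suff : forall f : nat -> V,
  (\sum_(0 <= a < b.+1 | odd a == odd b) f a = \sum_(0 <= i < b./2.+1) f (b - 2 * i)%N) /\
  (\sum_(0 <= a < b.+2 | odd a == odd b.+1) f a = \sum_(0 <= i < b.+1./2.+1) f (b.+1 - 2 * i)%N).
  by move=> H f; case: (H f).
elim: b => [|b IH] f.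
  by split; rewrite unlock /= ?addr0 ?add0r.
split; first by case: (IH f).
case: (IH f) => H _.
have L : \sum_(0 <= a < b.+3 | odd a == odd b.+2) f a =
    \sum_(0 <= a < b.+1 | odd a == odd b) f a + f b.+2.
  rewrite [LHS]big_mkcond (big_nat_recr b.+2) //= (big_nat_recr b.+1) //=.
  rewrite [X in _ = X + _]big_mkcond /= !negbK eqxx.
  have -> : (~~ odd b == odd b) = false by case: (odd b).
  by rewrite addr0.
rewrite L H.
have -> : (b.+2)./2.+1 = (b./2).+2 by [].
rewrite [RHS]big_nat_recl // muln0 subn0 addrC; congr (_ + _).
apply: eq_big_nat => i _; congr f; lia.
Qed.

Section DeltaFacts.
Variables (C : numClosedFieldType) (N : nat) (al : C) (A B : 'M[C]_N).

Lemma size_Deltas k : size (Deltas al A B k) = k.+1.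
Proof. by elim: k => [|k IH] //=; rewrite size_rcons IH. Qed.

Lemma nth_Deltas k i : (i <= k)%N -> (Deltas al A B k)`_i = Delta_t al A B i.
Proof.
elim: k i => [|k IH] i Hi.
  by case: i Hi.
rewrite leq_eqVlt in Hi; case/orP: Hi => [/eqP ->|Hi] //.
rewrite /= nth_rcons size_Deltas Hi; exact: IH.
Qed.

Lemma Delta_succ k : Delta_t al A B k.+1 = Delta_next al A B k.+1 (Deltas al A B k).
Proof. by rewrite /Delta_t /= nth_rcons size_Deltas ltnn eqxx. Qed.

End DeltaFacts.

Unset Implicit Arguments.
Theorem lemma5p3 (R : rcfType) (N : nat) (alpha : R)
    (A B : 'M[R[i]]_N) :
  0 < alpha < 1 ->
  orth_proj A -> orth_proj B ->
  forall k : nat, (1 <= k)%N ->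
    Delta_t (alpha%:C)%C A B k =
    \sum_(0 <= a < k.+1 | odd a == odd k)
      'C(k, (k + a)./2)%:R * ((alpha * (1 - alpha))%:C)%C ^+ (k - a)./2
        * delta_t (alpha%:C)%C A B a.
Proof.
move=> _ _ _.
set al := (alpha%:C)%C.
have Hb : ((alpha * (1 - alpha))%:C)%C = al * (1 - al).
  by rewrite /al rmorphM rmorphB rmorph1.
rewrite Hb.
set dv := delta_t al A B.
pose Rv k := \sum_(0 <= a < k.+1 | odd a == odd k)
      'C(k, (k + a)./2)%:R * (al * (1 - al)) ^+ (k - a)./2 * dv a.
have hR : forall b, Rv b = \sum_(0 <= i < b./2.+1) cf al b i * dv (b - 2 * i)%N.
  move=> b; rewrite /Rv reindex_par; apply: eq_big_nat => i /andP[_ Hi].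
  have H2 : (2 * b./2 <= b)%N by rewrite mul2n halfK leq_subr.
  have -> : ((b + (b - 2 * i)%N)./2 = b - i)%N.
    by rewrite (_ : (b + (b - 2 * i) = (b - i).*2)%N) ?half_double //; rewrite -mul2n; lia.
  have -> : ((b - (b - 2 * i)%N)./2 = i)%N.
    by rewrite (_ : (b - (b - 2 * i) = i.*2)%N) ?half_double //; rewrite -mul2n; lia.
  rewrite bin_sub; first by rewrite /cf /bet.
  lia.
suff : forall k, Delta_t al A B k = Rv k by move=> H k _; exact: H.
elim/ltn_ind => k IH.
case: k IH => [|k] IH.
  rewrite hR big_nat1 /cf bin0 expr0 mulr1 mul1r /dv.
  by [].
rewrite Delta_succ /Delta_next.
rewrite (eq_bigr (fun a : 'I_k.+1 => Rv a * (Fp al k.+1)`_a)); last first.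
  move=> i _; rewrite nth_Deltas; last by rewrite -ltnS.
  by rewrite IH // cka.
have Hkey := @key _ al Rv dv hR k.+1 (ltn0Sn k).
have HR0 : Rv 0 = d0 al A.
  by rewrite hR big_nat1 /cf bin0 expr0 mulr1 mul1r /dv.
have Hdv : dv k.+1 = trT al A B k.+1 + (if ~~ odd k.+1 then 2%:R * al ^+ k.+1 * d0 al A else 0)
        + (if odd k.+1 then 2%:R * al ^+ k.+1 * dB B else 0) by [].
rewrite Hdv HR0 in Hkey.
have E : Rv k.+1 = trT al A B k.+1 + (if ~~ odd k.+1 then 2%:R * al ^+ k.+1 * d0 al A else 0)
        + (if odd k.+1 then 2%:R * al ^+ k.+1 * dB B else 0)
        - (al ^+ k.+1 + (- al) ^+ k.+1) * d0 al A
        - \sum_(i < k.+1) (Fp al k.+1)`_i * Rv i.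
  by rewrite -Hkey addrAC subrr add0r.
rewrite E exprNn -signr_odd.
have -> : \sum_(i < k.+1) (Fp al k.+1)`_i * Rv i = \sum_(i < k.+1) Rv i * (Fp al k.+1)`_i.
  by apply: eq_bigr => i _; rewrite mulrC.
move: (\sum_(i < k.+1) Rv i * (Fp al k.+1)`_i) => S.
case: (odd k.+1); rewrite ?expr1 ?expr0 /=; ring.
Qed.
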